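(* Let $(R,\sigma_t)$ be a $\lambda$-ring and let $(P_\alpha)_{\alpha\in A}$ be a (possibly infinite) family of polynomials in $R_{sp}[T]$. Then there is a $\lambda$-ring homomorphism $(R,\sigma_t)\to(R',\sigma'_t)$ together with a family $(x_\alpha)_{\alpha\in A}$ of elements of $R'$ such that (i) $x_\alpha\in R'_{sp}$ for all $\alpha$ and (ii) $P_\alpha(x_\alpha)=0$ in $R'$ for all $\alpha$, which is universal with these properties: for every $\lambda$-ring homomorphism $R\to R''$ and family $(y_\alpha)$ in $R''_{sp}$ with $P_\alpha(y_\alpha)=0$ (coefficients mapped to $R''$), there is a unique $\lambda$-ring homomorphism $R'\to R''$ under $R$ mapping $x_\alpha$ to $y_\alpha$. In particular $(R',(x_\alpha))$ is unique up to isomorphism; it is denoted $R\langle x_\alpha\mid\alpha\in A\rangle$.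
   Context: A $\lambda$-ring is a commutative ring $R$ with unit and a map $\sigma_t:R\to1+tR[[t]]$, $\sigma_t(a)=\sum_{n\ge0}\sigma^n(a)t^n$, with $\sigma_t(0)=1$, $\sigma_t(a+b)=\sigma_t(a)\sigma_t(b)$ and $\sigma_t(a)\equiv1+at\pmod{t^2}$; homomorphisms are ring homomorphisms commuting with $\sigma_t$. Polynomials $P^{m,n}$: with variables $y_1,\dots,y_m$, $x_1,\dots,x_{mn}$ and $h_d$ the $d$-th complete homogeneous symmetric polynomial, $P^{m,n}$ is the polynomial with $h_m(\{y_i\bar x^{\bar n}\})=P^{m,n}(h_1(\bar y),\dots,h_m(\bar y),h_1(\bar x),\dots,h_{mn}(\bar x))$, where $h_m$ is evaluated on the family of all products $y_i\bar x^{\bar n}$ with $\bar x^{\bar n}$ ranging over monomials of total degree $n$ in $x_1,\dots,x_{mn}$. For a $\lambda$-ring $R$: $R_{sp}:=\{a\in R\mid \sigma^m(b\sigma^n(a))=P^{m,n}(\sigma^1(b),\dots,\sigma^m(b),\sigma^1(a),\dots,\sigma^{mn}(a))\ \forall b\in R,\ m,n\in\mathbb{N}\}$. *)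

(* Defs.v *)
From HB Require Import structures.
From mathcomp Require Import all_boot all_order all_algebra.
From mathcomp Require Import mpoly.
Set Implicit Arguments. Unset Strict Implicit. Unset Printing Implicit Defensive.
Import Order.TTheory GRing.Theory.
Local Open Scope ring_scope.

(* Rings are commutative with unit, possibly the zero ring (comPzRingType):
   e.g. adjoining a root of the constant polynomial 1 forces R' = 0. *)

(* sigma_t(a) = \sum_n sig n a t^n ; lambda-ring axioms of the paper. *)
Definition is_lambda (R : comPzRingType) (sig : nat -> R -> R) : Prop :=
  [/\ (forall a, sig 0%N a = 1),
      (forall a, sig 1%N a = a),
      (forall k, sig k.+1 0 = 0) &
      (forall k a b, sig k (a + b) = \sum_(i < k.+1) sig i a * sig (k - i)%N b)].

Definition ring_hom (R S : comPzRingType) (f : R -> S) : Prop :=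
  [/\ f 1 = 1, (forall a b, f (a + b) = f a + f b) & (forall a b, f (a * b) = f a * f b)].

Definition lambda_hom (R S : comPzRingType) (sR : nat -> R -> R) (sS : nat -> S -> S)
  (f : R -> S) : Prop :=
  ring_hom f /\ (forall k a, f (sR k a) = sS k (f a)).

(* complete homogeneous symmetric polynomial h_d evaluated on a finite family z:
   sum over all multisets of size d of indices of the corresponding monomial. *)
Definition hfam (R : comPzRingType) (J : finType) (z : J -> R) (d : nat) : R :=
  \sum_(f : {ffun J -> 'I_d.+1} | (\sum_j (f j : nat) == d)%N) \prod_j z j ^+ f j.

Definition meval_int (N : nat) (S : comPzRingType) (Q : {mpoly int[N]}) (v : 'I_N -> S) : S :=
  \sum_(mo <- msupp Q) (Q@_mo)%:~R * \prod_(i < N) v i ^+ mo i.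

Section Pmn.
Variables m n : nat.
Local Notation V := {mpoly int[m + m * n]}.
Definition yvar (i : 'I_m) : V := 'X_(lshift (m * n) i).
Definition xvar (k : 'I_(m * n)) : V := 'X_(rshift m k).
Definition degn_mono := {mo : 'X_{1..(m * n) < n.+1} | mdeg (bmnm mo) == n}.
Definition xmono (mo : degn_mono) : V :=
  \prod_(k < m * n) xvar k ^+ (bmnm (val mo) k).
Definition Pfamily (p : 'I_m * degn_mono) : V := yvar p.1 * xmono p.2.
Definition hpoint (j : 'I_(m + m * n)) : V :=
  match split j with inl i => hfam yvar i.+1 | inr k => hfam xvar k.+1 end.
Definition is_Pmn (Q : {mpoly int[m + m * n]}) : Prop :=
  hfam Pfamily m = meval_int Q hpoint.
End Pmn.

(* R_sp.  P^{m,n} is unique (the h's of disjoint variable sets are algebraically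
   independent), so "there is Q = P^{m,n} with ..." is "with Q := P^{m,n}". *)
Definition lsp (R : comPzRingType) (sig : nat -> R -> R) (a : R) : Prop :=
  forall (b : R) (m n : nat), exists Q : {mpoly int[m + m * n]},
    is_Pmn Q /\
    sig m (b * sig n a) =
      meval_int Q (fun j => match split j with
                            | inl i => sig i.+1 b | inr k => sig k.+1 a end).

(* one-variable polynomials as coefficient lists (lowest degree first) *)
Definition peval (R : comPzRingType) (s : seq R) (x : R) : R :=
  \sum_(i < size s) s`_i * x ^+ i.

(* Main.v *)
From HB Require Import structures.
From mathcomp Require Import all_boot all_order all_algebra.
From mathcomp Require Import mpoly.
From mathcomp Require Import boolp.
From mathcomp Require Import ring.
From mathcomp Require Import zify.
Require Import Defs.
Set Implicit Arguments. Unset Strict Implicit. Unset Printing Implicit Defensive.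
Import Order.TTheory GRing.Theory.
Local Open Scope ring_scope.

Section Hom.
Variables (S T : comPzRingType) (phi : S -> T).
Hypothesis Hphi : ring_hom phi.

Lemma rh1 : phi 1 = 1. Proof. by case: Hphi. Qed.
Lemma rhD a b : phi (a + b) = phi a + phi b. Proof. by case: Hphi. Qed.
Lemma rhM a b : phi (a * b) = phi a * phi b. Proof. by case: Hphi. Qed.
Lemma rh0 : phi 0 = 0.
Proof. by apply/(@addrI _ (phi 0)); rewrite -rhD !addr0. Qed.
Lemma rhN a : phi (- a) = - phi a.
Proof. by apply/(@addIr _ (phi a)); rewrite -rhD !addNr rh0. Qed.
Lemma rh_sum (I : Type) (r : seq I) (Pr : pred I) (F : I -> S) :
  phi (\sum_(i <- r | Pr i) F i) = \sum_(i <- r | Pr i) phi (F i).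
Proof. by apply: (big_morph phi); [exact: rhD | exact: rh0]. Qed.
Lemma rh_prod (I : Type) (r : seq I) (Pr : pred I) (F : I -> S) :
  phi (\prod_(i <- r | Pr i) F i) = \prod_(i <- r | Pr i) phi (F i).
Proof. by apply: (big_morph phi); [exact: rhM | exact: rh1]. Qed.
Lemma rhX a n : phi (a ^+ n) = phi a ^+ n.
Proof. by elim: n => [|n IH]; rewrite ?expr0 ?rh1 // !exprS rhM IH. Qed.
Lemma rhn n : phi n%:R = n%:R.
Proof. by elim: n => [|n IH]; rewrite ?rh0 // !mulrS rhD IH rh1. Qed.
Lemma rhz (z : int) : phi z%:~R = z%:~R.
Proof. by case: z => n; rewrite ?NegzE ?mulrNz ?rhN /intmul rhn. Qed.
Lemma rh_meval N (Q : {mpoly int[N]}) (v : 'I_N -> S) :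
  phi (meval_int Q v) = meval_int Q (fun i => phi (v i)).
Proof.
rewrite /meval_int rh_sum; apply: eq_bigr => mo _.
by rewrite rhM rhz rh_prod; congr (_ * _); apply: eq_bigr => i _; rewrite rhX.
Qed.
Lemma rh_peval (s : seq S) x : phi (peval s x) = peval (map phi s) (phi x).
Proof.
rewrite /peval rh_sum size_map; apply: eq_bigr => i _.
by rewrite rhM rhX (nth_map 0) // rh0.
Qed.
End Hom.

Section Univ.
Variables (R : comPzRingType) (sig : nat -> R -> R) (A : Type) (P : A -> seq R).

Definition good (S : comPzRingType) (sS : nat -> S -> S) (g : R -> S) (y : A -> S) : Prop :=
  [/\ is_lambda sS, lambda_hom sig sS g, (forall al, lsp sS (y al)) &
      (forall al, peval (map g (P al)) (y al) = 0)].

Inductive term : Type :=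
| tC of R | tV of A | t0 | t1 | tAdd of term & term | tOpp of term
| tMul of term & term | tSig of nat & term.

Fixpoint ev (S : comPzRingType) (sS : nat -> S -> S) (g : R -> S) (y : A -> S) (t : term) : S :=
  match t with
  | tC r => g r | tV a => y a | t0 => 0 | t1 => 1
  | tAdd s u => ev sS g y s + ev sS g y u
  | tOpp s => - ev sS g y s
  | tMul s u => ev sS g y s * ev sS g y u
  | tSig k s => sS k (ev sS g y s)
  end.

Definition eqv (s t : term) : Prop :=
  forall S sS g y, @good S sS g y -> ev sS g y s = ev sS g y t.

Definition car := {X : term -> Prop | exists t, X = eqv t}.

Definition cls (t : term) : car := exist _ (eqv t) (ex_intro _ t erefl).

Definition repr (c : car) : term := sval (cid (svalP c)).

Lemma eqv_sym s t : eqv s t -> eqv t s.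
Proof. by move=> H S sS g y G; rewrite H. Qed.

Lemma eqv_trans s t u : eqv s t -> eqv t u -> eqv s u.
Proof. by move=> H1 H2 S sS g y G; rewrite H1 // H2. Qed.

Lemma cls_eqv s t : eqv s t -> cls s = cls t.
Proof.
move=> H; apply: eq_exist_uncurried.
have E : eqv s = eqv t.
  apply/funext => u; apply/propext; split => H'.
    exact: eqv_trans (eqv_sym H) H'.
  exact: eqv_trans H H'.
exists E; exact: Prop_irrelevance.
Qed.

Lemma cls_repr c : cls (repr c) = c.
Proof.
case: c => X HX; rewrite /repr; case: cid => t /= Ht.
apply: eq_exist_uncurried; exists (esym Ht); exact: Prop_irrelevance.
Qed.

Lemma eqv_cls s t : cls s = cls t -> eqv s t.
Proof.
move=> /(congr1 sval) /= E.
have : eqv t t by [].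
by rewrite -E.
Qed.

Lemma repr_cls t : eqv (repr (cls t)) t.
Proof. by apply: eqv_cls; rewrite cls_repr. Qed.

Definition evc (S : comPzRingType) (sS : nat -> S -> S) (g : R -> S) (y : A -> S) (c : car) : S := @ev S sS g y (repr c).

Lemma evc_cls S sS g y t : @good S sS g y -> evc sS g y (cls t) = ev sS g y t.
Proof. by move=> G; rewrite /evc (@repr_cls t S sS g y G). Qed.

Lemma car_ext c d :
  (forall S sS g y, @good S sS g y -> evc sS g y c = evc sS g y d) -> c = d.
Proof. by move=> H; rewrite -(cls_repr c) -(cls_repr d); apply: cls_eqv. Qed.

Definition czero : car := cls t0.
Definition cone : car := cls t1.
Definition cadd c d := cls (tAdd (repr c) (repr d)).
Definition copp c := cls (tOpp (repr c)).
Definition cmul c d := cls (tMul (repr c) (repr d)).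
Definition csig k c := cls (tSig k (repr c)).

Section Ev.
Variables (S : comPzRingType) (sS : nat -> S -> S) (g : R -> S) (y : A -> S).
Hypothesis G : good sS g y.
Lemma evc0 : evc sS g y czero = 0. Proof. exact: evc_cls. Qed.
Lemma evc1 : evc sS g y cone = 1. Proof. exact: evc_cls. Qed.
Lemma evcD c d : evc sS g y (cadd c d) = evc sS g y c + evc sS g y d.
Proof. exact: evc_cls. Qed.
Lemma evcN c : evc sS g y (copp c) = - evc sS g y c.
Proof. exact: evc_cls. Qed.
Lemma evcM c d : evc sS g y (cmul c d) = evc sS g y c * evc sS g y d.
Proof. exact: evc_cls. Qed.
Lemma evcS k c : evc sS g y (csig k c) = sS k (evc sS g y c).
Proof. exact: evc_cls. Qed.
End Ev.

Ltac cext := let G := fresh "G" in apply: car_ext => ? ? ? ? G;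
  rewrite ?(evc0 G, evc1 G, evcD G, evcN G, evcM G, evcS G).

Lemma caddA : associative cadd. Proof. by move=> a b c; cext; rewrite addrA. Qed.
Lemma caddC : commutative cadd. Proof. by move=> a b; cext; rewrite addrC. Qed.
Lemma cadd0 : left_id czero cadd. Proof. by move=> a; cext; rewrite add0r. Qed.
Lemma caddN : left_inverse czero copp cadd. Proof. by move=> a; cext; rewrite addNr. Qed.
Lemma cmulA : associative cmul. Proof. by move=> a b c; cext; rewrite mulrA. Qed.
Lemma cmulC : commutative cmul. Proof. by move=> a b; cext; rewrite mulrC. Qed.
Lemma cmul1 : left_id cone cmul. Proof. by move=> a; cext; rewrite mul1r. Qed.
Lemma cmulD : left_distributive cmul cadd. Proof. by move=> a b c; cext; rewrite mulrDl. Qed.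

HB.instance Definition _ := gen_eqMixin car.
HB.instance Definition _ := gen_choiceMixin car.
HB.instance Definition _ := GRing.isZmodule.Build car caddA caddC cadd0 caddN.
HB.instance Definition _ := GRing.Zmodule_isComPzRing.Build car cmulA cmulC cmul1 cmulD.

Definition carR : comPzRingType := car.


Definition fR (r : R) : carR := cls (tC r).
Definition xA (al : A) : carR := cls (tV al).

Lemma carR_ext (c d : carR) :
  (forall S sS g y, @good S sS g y -> evc sS g y c = evc sS g y d) -> c = d.
Proof. exact: car_ext. Qed.

Section Ev2.
Variables (S : comPzRingType) (sS : nat -> S -> S) (g : R -> S) (y : A -> S).
Hypothesis G : good sS g y.
Lemma evc0' : evc sS g y (0 : carR) = 0. Proof. exact: evc0. Qed.
Lemma evc1' : evc sS g y (1 : carR) = 1. Proof. exact: evc1. Qed.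
Lemma evcD' (c d : carR) : evc sS g y (c + d) = evc sS g y c + evc sS g y d.
Proof. exact: evcD. Qed.
Lemma evcN' (c : carR) : evc sS g y (- c) = - evc sS g y c.
Proof. exact: evcN. Qed.
Lemma evcM' (c d : carR) : evc sS g y (c * d) = evc sS g y c * evc sS g y d.
Proof. exact: evcM. Qed.
Lemma evc_hom : ring_hom (evc sS g y : carR -> S).
Proof. by split; [exact: evc1' | exact: evcD' | exact: evcM']. Qed.
Lemma evcf r : evc sS g y (fR r) = g r. Proof. exact: evc_cls. Qed.
Lemma evcx al : evc sS g y (xA al) = y al. Proof. exact: evc_cls. Qed.
End Ev2.

End Univ.

Check carR.

Section Main.
Variables (R : comPzRingType) (sig : nat -> R -> R) (A : Type) (P : A -> seq R).
Hypothesis Hl : is_lambda sig.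
Hypothesis Hsp : forall al i, lsp sig (P al)`_i.
Hypothesis Huniq : forall m n (Q1 Q2 : {mpoly int[m + m * n]}),
  is_Pmn Q1 -> is_Pmn Q2 -> Q1 = Q2.

Local Notation car := (carR sig P).
Local Notation csig := (@csig R sig A P).
Local Notation fR := (@fR R sig A P).
Local Notation xA := (@xA R sig A P).

Lemma cls_add s u : cls sig P (tAdd s u) = (cls sig P s + cls sig P u : car).
Proof.
apply: carR_ext => S sS g y G; rewrite evcD' // !evc_cls //=.
Qed.

Lemma cls_opp s : cls sig P (tOpp s) = (- cls sig P s : car).
Proof. apply: carR_ext => S sS g y G; rewrite evcN' // !evc_cls //=. Qed.
Lemma cls_mul s u : cls sig P (tMul s u) = (cls sig P s * cls sig P u : car).
Proof. apply: carR_ext => S sS g y G; rewrite evcM' // !evc_cls //=. Qed.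
Lemma cls_sig k s : cls sig P (tSig k s) = csig k (cls sig P s).
Proof. apply: carR_ext => S sS g y G; rewrite evcS // !evc_cls //=. Qed.
Lemma cls_0 : cls sig P (@t0 R A) = (0 : car). Proof. by []. Qed.
Lemma cls_1 : cls sig P (@t1 R A) = (1 : car). Proof. by []. Qed.

Lemma car_lambda : is_lambda csig.
Proof.
split.
- move=> a; apply: carR_ext => S sS g y G; rewrite evcS // evc1' //.
  by case: G => [[]].
- move=> a; apply: carR_ext => S sS g y G; rewrite evcS //.
  by case: G => [[]].
- move=> k; apply: carR_ext => S sS g y G; rewrite evcS // evc0' //.
  by case: G => [[]].
- move=> k a b; apply: carR_ext => S sS g y G.
  rewrite evcS // evcD' // (rh_sum (evc_hom G)).
  case: (G) => [[_ _ _ ->]] _ _ _; apply: eq_bigr => i _.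
  by rewrite evcM' // !evcS.
Qed.

Lemma fR_hom : lambda_hom sig csig fR.
Proof.
case: (Hl) => _ _ _ _.
split; first split.
- apply: carR_ext => S sS g y G; rewrite evcf // evc1' //.
  by case: G => _ [[]].
- move=> a b; apply: carR_ext => S sS g y G; rewrite evcD' // !evcf //.
  by case: G => _ [[]].
- move=> a b; apply: carR_ext => S sS g y G; rewrite evcM' // !evcf //.
  by case: G => _ [[]].
- move=> k a; apply: carR_ext => S sS g y G; rewrite evcS // !evcf //.
  by case: G => _ [_].
Qed.

Lemma xA_sp al : lsp csig (xA al).
Proof.
move=> b m n.
have [Q [HQ _]] := Hsp al 0 0 m n.
exists Q; split => //.
apply: carR_ext => S sS g y G.
rewrite evcS // evcM' // evcS // evcx // (rh_meval (evc_hom G)).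
case: (G) => _ _ /(_ al (evc sS g y b) m n) [Q' [HQ' ->]] _.
rewrite (Huniq HQ HQ'); congr meval_int; apply: funext => j.
by case: split => i; rewrite evcS // evcx.
Qed.

Lemma xA_root al : peval (map fR (P al)) (xA al) = 0.
Proof.
apply: carR_ext => S sS g y G.
rewrite (rh_peval (evc_hom G)) evc0' // -map_comp evcx //.
rewrite (eq_map (evcf G)); by case: G.
Qed.

Lemma univ_prop (R'' : comPzRingType) (sig'' : nat -> R'' -> R'') (g : R -> R'')
                (y : A -> R'') :
  is_lambda sig'' -> lambda_hom sig sig'' g ->
  (forall al, lsp sig'' (y al)) ->
  (forall al, peval (map g (P al)) (y al) = 0) ->
  exists h : car -> R'',
    [/\ lambda_hom csig sig'' h,
        (forall r, h (fR r) = g r),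
        (forall al, h (xA al) = y al) &
        (forall h' : car -> R'',
           lambda_hom csig sig'' h' ->
           (forall r, h' (fR r) = g r) ->
           (forall al, h' (xA al) = y al) ->
           forall z, h' z = h z)].
Proof.
move=> H1 H2 H3 H4.
have G : good sig P sig'' g y by [].
exists (evc sig'' g y); split.
- split; first exact: evc_hom.
  by move=> k a; rewrite evcS.
- exact: evcf.
- exact: evcx.
move=> h' [hh' hs'] hf hx z.
have E : forall t, h' (cls sig P t) = ev sig'' g y t.
  elim => [r|al||| s IHs u IHu | s IHs | s IHs u IHu | k s IHs] /=.
  + exact: hf.
  + exact: hx.
  + by rewrite cls_0 (rh0 hh').
  + by rewrite cls_1 (rh1 hh').
  + by rewrite cls_add (rhD hh') IHs IHu.
  + by rewrite cls_opp (rhN hh') IHs.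
  + by rewrite cls_mul (rhM hh') IHs IHu.
  + by rewrite cls_sig hs' IHs.
by have := E (repr z); rewrite cls_repr.
Qed.
End Main.

Section Newton.
Variable S : comNzRingType.

Definition Gp d (a : S) : {poly S} := \sum_(i < d.+1) (a%:P * 'X) ^+ i.
Definition ehat (J : finType) (z : J -> S) k : S := (\prod_j (1 - (z j)%:P * 'X))`_k.

Lemma prodCX (J : finType) (z : J -> S) (f : J -> nat) :
  \prod_j ((z j)%:P * 'X) ^+ f j = (\prod_j z j ^+ f j)%:P * 'X^(\sum_j f j).
Proof.
under eq_bigr do rewrite exprMn.
rewrite big_split /= prodrXr rmorph_prod /=.
by congr (_ * _); apply: eq_bigr => j _; rewrite rmorphXn.
Qed.

Lemma hfam_coef (J : finType) (z : J -> S) d : hfam z d = (\prod_j Gp d (z j))`_d.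
Proof.
rewrite /Gp bigA_distr_bigA coef_sum /hfam.
rewrite [RHS](bigID (fun f : {ffun J -> 'I_d.+1} => (\sum_j (f j : nat) == d)%N)) /=.
rewrite [X in _ + X]big1 ?addr0.
  apply: eq_bigr => f /eqP Hf.
  by rewrite (prodCX z (fun j => (f j : nat))) coefCM coefXn Hf eqxx mulr1.
move=> f /negbTE Hf.
by rewrite (prodCX z (fun j => (f j : nat))) coefCM coefXn eq_sym Hf mulr0.
Qed.

Lemma prod_trunc (I : Type) (r : seq I) (p q : I -> {poly S}) n :
  (forall i, exists s, p i = q i + 'X^n * s) ->
  exists s, \prod_(i <- r) p i = \prod_(i <- r) q i + 'X^n * s.
Proof.
move=> H; elim: r => [|i r [s Hs]]; first by exists 0; rewrite !big_nil mulr0 addr0.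
have [t Ht] := H i.
exists (q i * s + t * \prod_(j <- r) q j + t * 'X^n * s).
rewrite !big_cons Ht Hs; ring.
Qed.

Lemma Gp_trunc k d (a : S) : (k <= d)%N ->
  exists s, Gp d a = Gp k a + 'X^(k.+1) * s.
Proof.
move=> kd; rewrite /Gp.
exists ((a%:P) ^+ k.+1 * \sum_(k.+1 <= i < d.+1) (a%:P * 'X) ^+ (i - k.+1)).
rewrite -!(big_mkord xpredT (fun i => (a%:P * 'X) ^+ i)).
rewrite (big_cat_nat _ (n := k.+1)) //=; congr (_ + _).
rewrite mulrA [_ * _%:P ^+ _]mulrC -exprMn big_distrr /=.
rewrite big_nat_cond [RHS]big_nat_cond; apply: eq_bigr => i /andP[/andP[Hi _] _].
by rewrite -exprD subnKC.
Qed.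

Lemma hfam_trunc (J : finType) (z : J -> S) k d : (k <= d)%N ->
  (\prod_j Gp d (z j))`_k = hfam z k.
Proof.
move=> kd; rewrite hfam_coef.
have [s ->] := prod_trunc (index_enum J) (fun j => Gp_trunc (z j) kd).
by rewrite coefD coefXnM ltnSn addr0.
Qed.

Lemma newton (J : finType) (z : J -> S) k : (0 < k)%N ->
  \sum_(i < k.+1) ehat z i * hfam z (k - i)%N = 0.
Proof.
move=> k0.
have E1 : (\prod_j (1 - (z j)%:P * 'X)) * (\prod_j Gp k (z j)) =
          \prod_j (1 - ((z j)%:P * 'X) ^+ k.+1).
  rewrite -big_split /=; apply: eq_bigr => j _.
  rewrite /Gp -[1 - _]opprB mulNr -subrX1 opprB //.
have E2 : exists s, \prod_j (1 - ((z j)%:P * 'X) ^+ k.+1) =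
                   \prod_(j : J) (1 : {poly S}) + 'X^(k.+1) * s.
  apply: prod_trunc => j; exists (- (z j)%:P ^+ k.+1).
  by rewrite exprMn mulrN mulrC.
have E3 := congr1 (fun p : {poly S} => p`_k) E1.
rewrite /= coefM in E3.
transitivity (\sum_(i < k.+1) (\prod_j (1 - (z j)%:P * 'X))`_i *
                 (\prod_j Gp k (z j))`_(k - i)%N).
  by apply: eq_bigr => i _; rewrite (hfam_trunc z (leq_subr i k)).
rewrite E3; case: E2 => s ->; rewrite big1 // coefD coefXnM ltnSn addr0 coef1.
by case: k k0 {E1 E3}.
Qed.

Lemma ehat0 (J : finType) (z : J -> S) : ehat z 0 = 1.
Proof.
rewrite /ehat coef0_prod big1 // => j _.
by rewrite coefB coef1 coefCM coefX mulr0 subr0.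
Qed.

Lemma hfam0 (J : finType) (z : J -> S) : hfam z 0 = 1.
Proof.
rewrite hfam_coef /Gp big1 ?coef1 // => j _.
by rewrite big_ord_recl big_ord0 expr0 addr0.
Qed.

Lemma ehatE (J : finType) (z : J -> S) k :
  ehat z k = \sum_(B : {set J} | #|B| == k) \prod_(j in B) - z j.
Proof.
rewrite /ehat.
have -> : \prod_j (1 - (z j)%:P * 'X) = \prod_j ((- z j)%:P * 'X + 1).
  by apply: eq_bigr => j _; rewrite polyCN mulNr addrC.
rewrite bigA_distr coef_sum [RHS]big_mkcond /=; apply: eq_bigr => B _.
rewrite -big_mkcond /= big_split /= -rmorph_prod prodr_const coefCM coefXn.
by rewrite eq_sym; case: eqP; rewrite ?mulr1 ?mulr0.
Qed.
End Newton.

Section Rec.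
Variable S : comPzRingType.

Fixpoint recf (v : nat -> S) (f k : nat) : S :=
  if f is f'.+1 then
    (if k is k'.+1 then - \sum_(i < k'.+1) v i.+1 * recf v f' (k' - i)%N else 1)
  else 1.
Definition rec v k := recf v k k.

Lemma recf_eq2 v f f' k : (k <= f)%N -> (k <= f')%N -> recf v f k = recf v f' k.
Proof.
elim: f k f' => [|f IH] k f'.
  by rewrite leqn0 => /eqP -> _; case: f'.
case: k => [|k] kf; first by case: f'.
case: f' => [//|f'] kf' /=; congr (- _); apply: eq_bigr => i _.
by rewrite (IH _ f') // (leq_trans (leq_subr _ _)).
Qed.

Lemma rec0 v : rec v 0 = 1. Proof. by []. Qed.
Lemma recS v k : rec v k.+1 = - \sum_(i < k.+1) v i.+1 * rec v (k - i)%N.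
Proof.
rewrite /rec /=; congr (- _); apply: eq_bigr => i _.
by rewrite (@recf_eq2 v k (k - i)) // leq_subr.
Qed.

Lemma rec_ext v w k : (forall i, (0 < i <= k)%N -> v i = w i) -> rec v k = rec w k.
Proof.
move=> H; suff: forall k', (k' <= k)%N -> rec v k' = rec w k' by apply.
move=> k'; elim: k' {-2}k' (leqnn k') => [|K IH] k' kK.
  by move: kK; rewrite leqn0 => /eqP ->.
case: k' kK => [//|k'] kK k'k; rewrite !recS; congr (- _); apply: eq_bigr => i _.
rewrite H; last by rewrite /= (leq_trans _ k'k) // ltnS.
rewrite IH //; first by rewrite (leq_trans (leq_subr _ _)).
by rewrite (leq_trans (leq_subr _ _)) // ltnW.
Qed.

Lemma rec_unique (a b : nat -> S) N : a 0 = 1 -> b 0 = 1 ->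
  (forall k, (0 < k <= N)%N -> \sum_(i < k.+1) a i * b (k - i)%N = 0) ->
  forall k, (k <= N)%N -> b k = rec a k.
Proof.
move=> a0 b0 H k; elim: k {-2}k (leqnn k) => [|K IH] k kK kN.
  by move: kK; rewrite leqn0 => /eqP ->.
case: k kK kN => [//|k] kK kN.
have := H k.+1 kN; rewrite big_ord_recl a0 mul1r subn0 => /eqP.
rewrite addr_eq0 => /eqP ->; rewrite recS; congr (- _); apply: eq_bigr => i _.
rewrite lift0 subSS IH //; first exact: leq_trans (leq_subr i k) kK.
exact: leq_trans (leq_subr i k) (ltnW kN).
Qed.

Lemma conv_sym (a b : nat -> S) k :
  \sum_(i < k.+1) a i * b (k - i)%N = \sum_(i < k.+1) b i * a (k - i)%N.
Proof.
rewrite (reindex_inj rev_ord_inj) /=; apply: eq_bigr => i _.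
by rewrite subKn; [rewrite mulrC | rewrite -ltnS].
Qed.
End Rec.

Lemma rec_morph (S T : comPzRingType) (phi : {rmorphism S -> T}) v k :
  phi (rec v k) = rec (phi \o v) k.
Proof.
elim: k {-2}k (leqnn k) => [|K IH] k kK.
  by move: kK; rewrite leqn0 => /eqP ->; rewrite !rec0 rmorph1.
case: k kK => [_|k kK]; first by rewrite !rec0 rmorph1.
rewrite !recS rmorphN rmorph_sum; congr (- _); apply: eq_bigr => i _.
by rewrite rmorphM IH // (leq_trans (leq_subr _ _)).
Qed.

Lemma prodX_set (M : nat) (B : {set 'I_M}) :
  \prod_(i in B) 'X_i = 'X_[mesym1 B] :> {mpoly int[M]}.
Proof.
rewrite mprodXE; congr 'X_[_].
apply/mnmP=> i; rewrite mnmE mnm_sumE big_mkcond /=.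
rewrite (bigD1 i) //= mnmE eqxx /= big1 ?addn0 // => j ne_ji.
by case: (_ \in _); rewrite // mnmE (negbTE ne_ji).
Qed.

Lemma mesym1_le (M c k : nat) (B D : {set 'I_M}) :
  (forall nu : 'I_M, (nu \in D) = (c <= nu < c + k)%N) ->
  #|B| = #|D| -> (forall nu : 'I_M, nu \in B -> (c <= nu)%N) ->
  (mesym1 B <= mesym1 D)%O.
Proof.
move=> HD HBD HB.
case: (boolP [exists nu, nu \in D :\: B]) => [/existsP[nu Hnu]|]; last first.
  rewrite negb_exists => /forallP H.
  suff -> : B = D by [].
  have sDB : D \subset B.
    by apply/subsetP => x xD; move: (H x); rewrite in_setD xD andbT negbK.
  by apply/esym/eqP; rewrite eqEcard sDB HBD leqnn.
pose i0 : 'I_M := [arg min_(j < nu | j \in D :\: B) j].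
apply/ltW/ltmcP; first by rewrite !mdeg_mesym1.
exists i0; rewrite {}/i0; case: arg_minnP => //=.
+ move=> i0 i0in i0min j lt_j_i0; rewrite !mnmE.
  move: i0in; rewrite in_setD (HD i0) => /andP[_ /andP[ci0 i0ck]].
  case jD : (j \in D).
    case jB : (j \in B) => //.
    have := i0min j; rewrite in_setD jD jB => /(_ isT).
    by rewrite leqNgt lt_j_i0.
  case jB : (j \in B) => //.
  move: jD; rewrite HD (HB _ jB) /= => /negbT; rewrite -leqNgt => H.
  have := leq_ltn_trans H (ltn_trans lt_j_i0 i0ck); by rewrite ltnn.
+ move=> i0 i0in i0min; rewrite !mnmE.
  by move: i0in; rewrite in_setD => /andP[/negbTE -> ->].
Qed.

Lemma mlead_eq (M : nat) (p : {mpoly int[M]}) mu :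
  mu \in msupp p -> (forall nu, nu \in msupp p -> (nu <= mu)%O) -> mlead p = mu.
Proof.
move=> Hmu Hle; apply/le_anti; rewrite msupp_le_mlead // andbT.
apply: Hle; apply: mlead_supp; apply: contraTneq Hmu => ->.
by rewrite msupp0.
Qed.

Section Block.
Variables (N M c : nat) (sg : 'I_N -> 'I_M).
Hypothesis Hsg : forall i, val (sg i) = (c + val i)%N.

Lemma sg_inj : injective sg.
Proof. by move=> i j /(congr1 val); rewrite !Hsg => /addnI /val_inj. Qed.

Definition zX (i : 'I_N) : {mpoly int[M]} := 'X_(sg i).

Definition psum k : {mpoly int[M]} :=
  \sum_(B : {set 'I_N} | #|B| == k) 'X_[mesym1 (sg @: B)].

Lemma ehatX k : ehat zX k = (-1) ^+ k * psum k.
Proof.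
rewrite ehatE /psum big_distrr /=; apply: eq_bigr => B /eqP HB.
rewrite prodrN HB; congr (_ * _).
rewrite -prodX_set big_imset //=.
by move=> i j _ _; apply: sg_inj.
Qed.

Lemma mcoeff_psum k nu :
  (psum k)@_nu = \sum_(B : {set 'I_N} | #|B| == k) (mesym1 (sg @: B) == nu)%:R.
Proof.
rewrite /psum raddf_sum /=; apply: eq_bigr => B _; by rewrite mcoeffX.
Qed.

Definition B0 k : {set 'I_N} := [set i : 'I_N | (i < k)%N].

Lemma card_B0 k : (k <= N)%N -> #|B0 k| = k.
Proof.
move=> kN; rewrite /B0 -sum1dep_card -(big_ord_widen _ (fun _ => 1%N)) //=.
by rewrite sum1_card card_ord.
Qed.

Lemma B0_img k (nu : 'I_M) : (k <= N)%N ->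
  (nu \in sg @: B0 k) = (c <= nu < c + k)%N.
Proof.
move=> kN; apply/imsetP/idP => [[i]|/andP[c_nu nu_ck]].
  by rewrite inE => ik ->; rewrite Hsg leq_addr ltn_add2l.
have lt : (nu - c < N)%N by rewrite ltn_subLR // (leq_trans nu_ck) // leq_add2l.
exists (Ordinal lt); first by rewrite inE /= ltn_subLR.
by apply/val_inj; rewrite Hsg /= subnKC.
Qed.

Lemma mlead_psum k : (k <= N)%N ->
  mesym1 (sg @: B0 k) \in msupp (psum k) /\ mlead (psum k) = mesym1 (sg @: B0 k).
Proof.
move=> kN.
have imsinj : injective (fun B : {set 'I_N} => mesym1 (sg @: B)).
  move=> B1 B2 /inj_mesym1 /imset_inj; apply; exact: sg_inj.
have Hin : mesym1 (sg @: B0 k) \in msupp (psum k).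
  rewrite mcoeff_msupp mcoeff_psum (bigD1 (B0 k)) /=; last by rewrite card_B0.
  rewrite eqxx big1 ?addr0 ?oner_eq0 // => B /andP[_ ne].
  by case: eqP => // /imsinj E; rewrite E eqxx in ne.
split => //; apply: mlead_eq => // nu.
rewrite mcoeff_msupp mcoeff_psum.
case: (boolP [exists B : {set 'I_N}, (#|B| == k) && (mesym1 (sg @: B) == nu)]).
  case/existsP => B /andP[/eqP HB /eqP <-] _.
  apply: (@mesym1_le M c k) => [nu'|| nu'].
  - exact: B0_img.
  - by rewrite !card_imset //; try exact: sg_inj; rewrite HB card_B0.
  - by case/imsetP => i _ ->; rewrite Hsg leq_addr.
rewrite negb_exists => /forallP H; rewrite big1 ?eqxx // => B HB.
by have := H B; rewrite HB /= => /negbTE ->.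
Qed.

Lemma mlead_ehat k : (k <= N)%N ->
  ehat zX k != 0 /\ mlead (ehat zX k) = mesym1 (sg @: B0 k).
Proof.
move=> kN; have [Hin Hl] := mlead_psum kN.
have -> : ehat zX k = ((-1) ^+ k : int) *: psum k.
  by rewrite ehatX -mul_mpolyC rmorphXn rmorphN1.
have nz : ((-1) ^+ k : int) != 0 by rewrite signr_eq0.
split; last by rewrite mleadZ.
apply/eqP => E; move: Hin; rewrite mcoeff_msupp.
have := congr1 (mcoeff (mesym1 (sg @: B0 k))) E.
rewrite mcoeffZ mcoeff0 => /eqP; rewrite mulf_eq0 (negbTE nz) /= => /eqP ->.
by rewrite eqxx.
Qed.
End Block.

Lemma seq_max (T : eqType) (M : nat) (f : T -> 'X_{1..M}) (s : seq T) :
  s != [::] -> exists2 x, x \in s & forall y, y \in s -> (f y <= f x)%O.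
Proof.
elim: s => [//|a s IH] _.
case: (eqVneq s [::]) => [->|ns].
  by exists a; rewrite ?mem_head // => y; rewrite inE => /eqP ->.
have [x xs Hx] := IH ns.
case: (leP (f a) (f x)) => H.
  exists x; first by rewrite inE xs orbT.
  by move=> y; rewrite inE => /orP[/eqP ->|/Hx].
exists a; first exact: mem_head.
move=> y; rewrite inE => /orP[/eqP ->//|/Hx Hy].
exact: (le_trans Hy (ltW H)).
Qed.

Lemma comp_inj (K M : nat) (g : K.-tuple {mpoly int[M]}) :
  (forall j, tnth g j != 0) ->
  injective (fun a : 'X_{1..K} => (\sum_(j < K) mlead (tnth g j) *+ a j)%MM) ->
  forall F : {mpoly int[K]}, F \mPo g = 0 -> F = 0.
Proof.
move=> nz inj F; apply: contra_eq => nzF.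
pose XS (mu : 'X_{1..K}) := 'X_[mu] \mPo g.
have nzXS mu : XS mu != 0.
  rewrite /XS comp_mpolyX; apply/prodf_neq0 => i _; exact: expf_neq0.
have LXS mu : mlead (XS mu) = (\sum_(j < K) mlead (tnth g j) *+ mu j)%MM.
  rewrite /XS comp_mpolyX mlead_prod; last by move=> i _ _; exact: expf_neq0.
  by apply: eq_bigr => i _; rewrite mleadX.
have nsF : msupp F != [::] by rewrite msupp_eq0.
have [mus mus_in Hmax] := @seq_max _ _ (fun mu => mlead (XS mu)) (msupp F) nsF.
apply/eqP => /(congr1 (mcoeff (mlead (XS mus)))); rewrite mcoeff0.
rewrite comp_mpolyEX raddf_sum /= (bigD1_seq mus) ?msupp_uniq //= big1_seq.
  rewrite addr0 mcoeffZ; apply/eqP; rewrite mulf_neq0 //.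
    by rewrite -mcoeff_msupp.
  by rewrite mleadc_eq0.
move=> mu /andP[ne mu_in]; rewrite mcoeffZ (@mcoeff_gt_mlead _ _ (XS mu)) ?mulr0 //.
rewrite Order.POrderTheory.lt_neqAle Hmax // andbT; apply: contra ne => /eqP E.
by apply/eqP/inj; rewrite /= -!LXS E.
Qed.

Lemma comp_comp (K M : nat) (p : {mpoly int[K]}) (lq : K.-tuple {mpoly int[M]})
  (lr : M.-tuple {mpoly int[M]}) :
  (p \mPo lq) \mPo lr = p \mPo [tuple (tnth lq i) \mPo lr | i < K].
Proof.
rewrite [p \mPo lq]comp_mpolyE [RHS]comp_mpolyE raddf_sum /=; apply: eq_bigr => mu _.
rewrite comp_mpolyZ rmorph_prod /=; congr (_ *: _); apply: eq_bigr => i _.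
by rewrite rmorphXn tnth_mktuple.
Qed.

Lemma split_l m n (i : 'I_m) : split (lshift n i) = inl i.
Proof. exact: (unsplitK (inl _ i)). Qed.
Lemma split_r m n (i : 'I_n) : split (rshift m i) = inr i.
Proof. exact: (unsplitK (inr _ i)). Qed.

Section Indep.
Variables m n : nat.
Local Notation M := (m + m * n)%N.
Local Notation V := {mpoly int[M]}.

Definition evec (j : 'I_M) : V :=
  match split j with inl i => ehat (@yvar m n) i.+1 | inr k => ehat (@xvar m n) k.+1 end.

Definition blk (N : nat) (sg : 'I_N -> 'I_M) (t : 'I_M -> V) : nat -> V :=
  fun i => if i is i'.+1 then (if insub i' is Some i0 then t (sg i0) else 0) else 1.

Definition blkj (j : 'I_M) (t : 'I_M -> V) : nat -> V :=
  match split j with inl _ => blk (lshift (m * n)) t | inr _ => blk (@rshift m (m * n)) t end.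

Definition dj (j : 'I_M) : nat := match split j with inl i => i.+1 | inr k => k.+1 end.

Definition Theta (j : 'I_M) : V := rec (blkj j (fun i => 'X_i)) (dj j).

Definition tH : M.-tuple V := [tuple @hpoint m n j | j < M].
Definition tE : M.-tuple V := [tuple evec j | j < M].
Definition tT : M.-tuple V := [tuple Theta j | j < M].

Lemma comp_rec j (t : M.-tuple V) : Theta j \mPo t = rec (blkj j (tnth t)) (dj j).
Proof.
rewrite /Theta (rec_morph (comp_mpoly t)); congr rec.
apply: funext => i; rewrite /blkj /=; case: split => _; case: i => [|i] /=;
  rewrite ?rmorph1 //; case: insub => [i0|] /=;
  by rewrite ?comp_mpoly0 // comp_mpolyXU -tnth_nth.
Qed.

Lemma rec_eh (N : nat) (z : 'I_N -> V) k : rec (ehat z) k = hfam z k.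
Proof.
symmetry; apply: (@rec_unique _ _ _ k) => //; first exact: ehat0.
  exact: hfam0.
by move=> k' /andP[k0 _]; apply: newton.
Qed.

Lemma rec_he (N : nat) (z : 'I_N -> V) k : rec (hfam z) k = ehat z k.
Proof.
symmetry; apply: (@rec_unique _ _ _ k) => //; first exact: hfam0.
  exact: ehat0.
by move=> k' /andP[k0 _]; rewrite conv_sym; apply: newton.
Qed.

Lemma blk_ok (N : nat) (sg : 'I_N -> 'I_M) (t : 'I_M -> V) (f : nat -> V) K :
  (K <= N)%N -> (forall i0 : 'I_N, t (sg i0) = f (val i0).+1) ->
  forall k, (0 < k <= K)%N -> blk sg t k = f k.
Proof.
move=> KN Ht [//|k] /andP[_ kK] /=.
case: insubP => [i0 _ /= <-|]; first exact: Ht.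
by rewrite (leq_trans kK KN).
Qed.

Lemma ThetaE j : Theta j \mPo tE = @hpoint m n j.
Proof.
rewrite comp_rec /blkj /dj /hpoint.
case E: (split j) => [i|k].
- transitivity (rec (ehat (@yvar m n)) i.+1); last exact: rec_eh.
  apply: rec_ext; apply: (blk_ok (ltn_ord i)) => i0.
  by rewrite tnth_mktuple /evec split_l.
- transitivity (rec (ehat (@xvar m n)) k.+1); last exact: rec_eh.
  apply: rec_ext; apply: (blk_ok (ltn_ord k)) => i0.
  by rewrite tnth_mktuple /evec split_r.
Qed.

Lemma ThetaH j : Theta j \mPo tH = evec j.
Proof.
rewrite comp_rec /blkj /dj /evec.
case E: (split j) => [i|k].
- transitivity (rec (hfam (@yvar m n)) i.+1); last exact: rec_he.
  apply: rec_ext; apply: (blk_ok (ltn_ord i)) => i0.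
  by rewrite tnth_mktuple /hpoint split_l.
- transitivity (rec (hfam (@xvar m n)) k.+1); last exact: rec_he.
  apply: rec_ext; apply: (blk_ok (ltn_ord k)) => i0.
  by rewrite tnth_mktuple /hpoint split_r.
Qed.

Definition Sset (j : 'I_M) : {set 'I_M} :=
  [set nu : 'I_M | (nu <= j)%N && ((m <= nu)%N || (j < m)%N)].

Lemma evec_lead j : evec j != 0 /\ mlead (evec j) = mesym1 (Sset j).
Proof.
rewrite /evec; case: splitP => [i Hi | k Hk].
- have Hsg : forall i0 : 'I_m, val (lshift (m * n) i0) = (0 + val i0)%N by [].
  have [nz Hl] := mlead_ehat Hsg (ltn_ord i).
  split; first exact: nz.
  rewrite Hl; congr mesym1; apply/setP => nu.
  rewrite (B0_img Hsg) ?ltn_ord // !inE Hi (ltn_ord i) orbT andbT add0n /=.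
  by rewrite ltnS.
- have Hsg : forall i0 : 'I_(m * n), val (@rshift m (m * n) i0) = (m + val i0)%N by [].
  have [nz Hl] := mlead_ehat Hsg (ltn_ord k).
  split; first exact: nz.
  rewrite Hl; congr mesym1; apply/setP => nu.
  rewrite (B0_img Hsg) ?ltn_ord // !inE Hk.
  rewrite [(m + k < m)%N]ltnNge leq_addr orbF addnS ltnS.
  by rewrite andbC.
Qed.

Lemma E_inj : injective (fun a : 'X_{1..M} => (\sum_(j < M) mlead (tnth tE j) *+ a j)%MM).
Proof.
move=> a b /= Eab.
have C : forall (c : 'X_{1..M}) nu,
    ((\sum_(j < M) mlead (tnth tE j) *+ c j)%MM nu = \sum_(j < M) (nu \in Sset j) * c j)%N.
  move=> c nu; rewrite mnm_sumE; apply: eq_bigr => j _.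
  by rewrite mulmnE tnth_mktuple (evec_lead j).2 mnmE.
apply/mnmP => nu.
suff H : forall K (nu : 'I_M), (M - nu <= K)%N -> a nu = b nu.
  by apply: (H M); rewrite leq_subr.
elim => [|K IH] nu' Hnu'.
  by move: Hnu'; rewrite leqn0 subn_eq0 leqNgt ltn_ord.
move: (congr1 (fun c : 'X_{1..M} => c nu') Eab); rewrite /= !C.
have Hin : nu' \in Sset nu' by rewrite inE leqnn /=; case: leqP.
rewrite (bigD1 nu') //= [in X in _ = X](bigD1 nu') //= Hin !mul1n.
rewrite (eq_bigr (fun j => (nu' \in Sset j) * b j)%N); first by move/addIn.
move=> j ne; case Hj : (nu' \in Sset j); rewrite ?mul0n // !mul1n.
apply: IH; move: Hj; rewrite inE => /andP[le _].
have lt : (nu' < j)%N by rewrite ltn_neqAle le andbT; apply: contra ne => /eqP/val_inj ->.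
have := ltn_ord j; move: Hnu' lt; clear; lia.
Qed.

Lemma E_indep (F : {mpoly int[M]}) : F \mPo tE = 0 -> F = 0.
Proof.
apply: comp_inj; last exact: E_inj.
by move=> j; rewrite tnth_mktuple; case: (evec_lead j).
Qed.

Lemma H_indep (F : {mpoly int[M]}) : F \mPo tH = 0 -> F = 0.
Proof.
move=> HF.
have E1 : [tuple (tnth tT i) \mPo tE | i < M] = tH.
  by apply: eq_mktuple => i; rewrite tnth_mktuple ThetaE.
have E2 : [tuple (tnth tT i) \mPo tH | i < M] = tE.
  by apply: eq_mktuple => i; rewrite tnth_mktuple ThetaH.
have G0 : F \mPo tT = 0.
  by apply: E_indep; rewrite comp_comp E1.
apply: E_indep; rewrite -E2 -comp_comp G0.
exact: comp_mpoly0.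
Qed.
End Indep.

Lemma meval_comp m n (Q : {mpoly int[m + m * n]}) :
  meval_int Q (@hpoint m n) = Q \mPo tH m n.
Proof.
rewrite /meval_int comp_mpolyE; apply: eq_bigr => mu _.
rewrite -mul_mpolyC; congr (_ * _).
  by rewrite -[in RHS](intz (Q@_mu)) rmorph_int.
by apply: eq_bigr => i _; rewrite tnth_mktuple.
Qed.

Lemma Pmn_unique m n (Q1 Q2 : {mpoly int[m + m * n]}) :
  is_Pmn Q1 -> is_Pmn Q2 -> Q1 = Q2.
Proof.
rewrite /is_Pmn !meval_comp => -> /eqP.
rewrite -subr_eq0 -comp_mpolyB => /eqP /H_indep /eqP.
by rewrite subr_eq0 => /eqP.
Qed.

Theorem mainTheorem5 (R : comPzRingType) (sig : nat -> R -> R) (A : Type)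
    (P : A -> seq R) :
  is_lambda sig ->
  (forall al i, lsp sig (P al)`_i) ->
  exists (R' : comPzRingType) (sig' : nat -> R' -> R') (f : R -> R') (x : A -> R'),
    [/\ is_lambda sig', lambda_hom sig sig' f,
        (forall al, lsp sig' (x al)),
        (forall al, peval (map f (P al)) (x al) = 0) &
        (forall (R'' : comPzRingType) (sig'' : nat -> R'' -> R'') (g : R -> R'')
                (y : A -> R''),
           is_lambda sig'' -> lambda_hom sig sig'' g ->
           (forall al, lsp sig'' (y al)) ->
           (forall al, peval (map g (P al)) (y al) = 0) ->
           exists h : R' -> R'',
             [/\ lambda_hom sig' sig'' h,
                 (forall r, h (f r) = g r),
                 (forall al, h (x al) = y al) &
                 (forall h' : R' -> R'',
                    lambda_hom sig' sig'' h' ->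
                    (forall r, h' (f r) = g r) ->
                    (forall al, h' (x al) = y al) ->
                    forall z, h' z = h z)])].
Proof.
move=> Hl Hsp.
exists (carR sig P), (@csig R sig A P), (@fR R sig A P), (@xA R sig A P).
split.
- exact: car_lambda.
- exact: fR_hom.
- exact: xA_sp Hsp Pmn_unique.
- exact: xA_root.
- exact: univ_prop.
Qed.
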